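(* Suppose that $U=L(0)\otimes A\oplus L(2)\otimes B$. The algebra $\mathrm{Ass}^{\mathrm{TKK}}(U)$ is the quotient of $\mathrm{Ass}(U)$ by the relations given by the $\mathfrak{sl}_2$-submodule in $U^{\otimes 2}$ generated by $(e\otimes B)\otimes T(L(0)\otimes A)\otimes (e\otimes B)$, where $e$ is the highest weight vector of $L(2)$.
   Context: We work over a field $k$ of characteristic zero. For $n\ge 0$, $L(n)$ denotes the irreducible $\mathfrak{sl}_2$-module of highest weight $n$; $L(0)$ is the trivial module and $L(2)$ is the adjoint module $\mathfrak{sl}_2$ with basis $e,f,h$. The category $\mathrm{TKK}$ has as objects the completely reducible $\mathfrak{sl}_2$-modules that are direct sums of copies of $L(0)$ and $L(2)$, i.e. $L(0)\otimes A\oplus L(2)\otimes B$ for multiplicity vector spaces $A,B$, and as morphisms $\mathfrak{sl}_2$-module maps. $\mathrm{Ass}(V)=T(V)$ is the free unital associative (tensor) algebra, and $\mathrm{Ass}^{\mathrm{TKK}}(U)$ is the free unital associative algebra in $\mathrm{TKK}$ generated by $U$ (left adjoint of the forgetful functor from associative algebras in $\mathrm{TKK}$ with $\mathfrak{sl}_2$-equivariant product), which is the quotient of $T(U)$ by the ideal generated by all $\mathfrak{sl}_2$-isotypic components $L(m)$ with $m\neq 0,2$. (The generating submodule lies in $U^{\otimes(s+2)}$ for the various degrees $s$ of the middle factor.) *)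

(* Defs.v *)
From HB Require Import structures.
From mathcomp Require Import all_boot all_order all_algebra.
Set Implicit Arguments. Unset Strict Implicit. Unset Printing Implicit Defensive.
Import Order.TTheory GRing.Theory Num.Theory.
Local Open Scope ring_scope.

Definition iE : 'I_3 := @Ordinal 3 0 isT.
Definition iH : 'I_3 := @Ordinal 3 1 isT.
Definition iF : 'I_3 := @Ordinal 3 2 isT.

Section TKK.
Variables (k : fieldType) (I J : eqType).

(* U = L(0) (x) A  (+)  L(2) (x) B, with A having basis I and B basis J.
   Letters = basis vectors of U:  inl i  = 1 (x) a_i,
                                  inr (j, t) = (basis vector t of sl2) (x) b_j. *)
Definition letter : eqType := (I + J * 'I_3)%type.

(* Elements of T(U) are represented by their coefficient functions on
   words (basis of T(U)); only finitely supported ones belong to T(U). *)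
Definition series := seq letter -> k.

Definition finsupp (p : series) : Prop :=
  exists s : seq (seq letter), forall w, w \notin s -> p w = 0.

(* indicator of a word = the tensor monomial *)
Definition wordf (u : seq letter) : series := fun w => (w == u)%:R.

(* product in T(U) (concatenation, extended bilinearly) *)
Definition mul (p q : series) : series :=
  fun w => \sum_(i < (size w).+1) p (take i w) * q (drop i w).

(* adjoint action on sl2 = L(2): coefficient of t' in [x, t] *)
Definition adj (x t t' : 'I_3) : k :=
  let c (a : k) (n : nat) := if val t' == n then a else 0 in
  match val x, val t with
  | 0%N, 1%N => c (- 2) 0%N      (* [e,h] = -2e *)
  | 0%N, 2%N => c 1 1%N          (* [e,f] = h   *)
  | 1%N, 0%N => c 2 0%N          (* [h,e] = 2e  *)
  | 1%N, 2%N => c (- 2) 2%N      (* [h,f] = -2f *)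
  | 2%N, 0%N => c (- 1) 1%N      (* [f,e] = -h  *)
  | 2%N, 1%N => c 2 2%N          (* [f,h] = 2f  *)
  | _, _ => 0
  end.

(* action of x in sl2 on T(U), by derivations (L(0) factors are trivial):
   coefficient of the word w in x . p *)
Definition act (x : 'I_3) (p : series) : series :=
  fun w => \sum_(n < size w)
    match drop n w with
    | inr (j, t) :: rest =>
        \sum_(t' < 3) adj x t' t * p (take n w ++ inr (j, t') :: rest)
    | _ => 0
    end.

Inductive lin_span (S : series -> Prop) : series -> Prop :=
| ls_gen p : S p -> lin_span S p
| ls_zero : lin_span S (fun _ => 0)
| ls_add p q : lin_span S p -> lin_span S q -> lin_span S (fun w => p w + q w)
| ls_scale c p : lin_span S p -> lin_span S (fun w => c * p w)
| ls_ext p q : (forall w, p w = q w) -> lin_span S p -> lin_span S q.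

Inductive submod_gen (S : series -> Prop) : series -> Prop :=
| sm_gen p : S p -> submod_gen S p
| sm_zero : submod_gen S (fun _ => 0)
| sm_add p q : submod_gen S p -> submod_gen S q -> submod_gen S (fun w => p w + q w)
| sm_scale c p : submod_gen S p -> submod_gen S (fun w => c * p w)
| sm_act x p : submod_gen S p -> submod_gen S (act x p)
| sm_ext p q : (forall w, p w = q w) -> submod_gen S p -> submod_gen S q.

Inductive ideal_gen (S : series -> Prop) : series -> Prop :=
| id_gen p : S p -> ideal_gen S p
| id_zero : ideal_gen S (fun _ => 0)
| id_add p q : ideal_gen S p -> ideal_gen S q -> ideal_gen S (fun w => p w + q w)
| id_scale c p : ideal_gen S p -> ideal_gen S (fun w => c * p w)
| id_mull a p : finsupp a -> ideal_gen S p -> ideal_gen S (mul a p)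
| id_mulr a p : finsupp a -> ideal_gen S p -> ideal_gen S (mul p a)
| id_ext p q : (forall w, p w = q w) -> ideal_gen S p -> ideal_gen S q.

(* An sl2-module map L(m) -> T(U), given by the images phi 0, ..., phi m of
   the standard basis v_0,...,v_m of L(m):
     h v_i = (m - 2i) v_i,  f v_i = v_(i+1) (v_(m+1) = 0),
     e v_i = i (m - i + 1) v_(i-1) (v_(-1) = 0). *)
Definition is_Lhom (m : nat) (phi : nat -> series) : Prop :=
  forall i, (i <= m)%N ->
    [/\ finsupp (phi i),
        forall w, act iH (phi i) w = (m%:R - (2 * i)%:R) * phi i w,
        forall w, act iF (phi i) w = (if (i < m)%N then phi i.+1 w else 0)
      & forall w, act iE (phi i) w =
                  (if i is i'.+1 then (i * (m - i + 1))%:R * phi i' w else 0)].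

(* L(m)-isotypic component of T(U): sum of all submodules isomorphic to
   L(m) = span of the images of all module maps L(m) -> T(U). *)
Definition isotypic (m : nat) : series -> Prop :=
  lin_span (fun q => exists phi, is_Lhom m phi /\ exists2 i, (i <= m)%N & q = phi i).

Definition tkk_ideal : series -> Prop :=
  ideal_gen (fun p => exists m, [/\ m <> 0%N, m <> 2%N & isotypic m p]).

Definition eBAeB : series -> Prop :=
  fun p => exists j j' (u : seq I),
    p = wordf (inr (j, iE) :: map inl u ++ [:: inr (j', iE)]).

End TKK.

(* Main.v *)
Require Import Defs.
From HB Require Import structures.
From mathcomp Require Import all_boot all_order all_algebra.
From mathcomp Require Import ring lra zify.
Set Implicit Arguments. Unset Strict Implicit. Unset Printing Implicit Defensive.
Import GRing.Theory.
Local Open Scope ring_scope.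

Section Work.
Variables (k : fieldType) (I J : eqType).
Local Notation series := (series k I J).
Local Notation letter := (letter I J).
Local Notation tmul := (@Defs.mul k I J).
Local Notation wf := (@wordf k I J).

Lemma ord3P (t : 'I_3) : t = iE \/ t = iH \/ t = iF.
Proof.
case: t => [[|[|[|n]]] Ht]; [left|right;left|right;right|by []]; exact: val_inj.
Qed.

Lemma ord3_sum (F : 'I_3 -> k) : \sum_(t < 3) F t = F iE + F iH + F iF.
Proof.
rewrite !big_ord_recl big_ord0 addr0 addrA; congr (F _ + F _ + F _); exact: val_inj.
Qed.

Lemma act_ext x (p q : series) : (forall w, p w = q w) -> forall w, act x p w = act x q w.
Proof.
move=> H w; rewrite /act; apply: eq_bigr => n _.
case: (drop n w) => [|[a|[j t]] r] //; apply: eq_bigr => t' _; by rewrite H.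
Qed.

Lemma act0 x (p : series) : (forall w, p w = 0) -> forall w, act x p w = 0.
Proof.
move=> H w; rewrite /act big1 // => n _.
case: (drop n w) => [|[a|[j t]] r] //; rewrite big1 // => t' _; by rewrite H mulr0.
Qed.

Lemma act_add x (p q : series) w :
  act x (fun v => p v + q v) w = act x p w + act x q w.
Proof.
rewrite /act -big_split; apply: eq_bigr => n _ /=.
case: (drop n w) => [|[a|[j t]] r] /=; rewrite ?addr0 //.
rewrite -big_split; apply: eq_bigr => t' _; by rewrite mulrDr.
Qed.

Lemma act_scale x c (p : series) w :
  act x (fun v => c * p v) w = c * act x p w.
Proof.
rewrite /act big_distrr; apply: eq_bigr => n _ /=.
case: (drop n w) => [|[a|[j t]] r] /=; rewrite ?mulr0 //.
rewrite big_distrr; apply: eq_bigr => t' _; by rewrite mulrCA.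
Qed.

Lemma act_nil x (p : series) : act x p [::] = 0.
Proof. by rewrite /act big_ord0. Qed.

Definition d0 x (p : series) (l : letter) w : k :=
  match l with
  | inr (j, t) => \sum_(t' < 3) adj k x t' t * p (inr (j, t') :: w)
  | inl _ => 0
  end.

Lemma act_cons x (p : series) l w :
  act x p (l :: w) = d0 x p l w + act x (fun v => p (l :: v)) w.
Proof.
by rewrite /act /= big_ord_recl /=.
Qed.

Lemma mul_nil (p q : series) : tmul p q [::] = p [::] * q [::].
Proof. by rewrite /Defs.mul big_ord_recl big_ord0 addr0. Qed.

Lemma mul_cons (p q : series) l w :
  tmul p q (l :: w) = p [::] * q (l :: w) + tmul (fun v => p (l :: v)) q w.
Proof.
by rewrite /Defs.mul /= big_ord_recl /=.
Qed.

Lemma mul_ext (p p' q q' : series) : (forall w, p w = p' w) -> (forall w, q w = q' w) ->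
  forall w, tmul p q w = tmul p' q' w.
Proof. by move=> H1 H2 w; rewrite /Defs.mul; apply: eq_bigr => i _; rewrite H1 H2. Qed.

Lemma mul_addl (p p' q : series) w :
  tmul (fun v => p v + p' v) q w = tmul p q w + tmul p' q w.
Proof. by rewrite /Defs.mul -big_split; apply: eq_bigr => i _; rewrite mulrDl. Qed.

Lemma mul_addr (p q q' : series) w :
  tmul p (fun v => q v + q' v) w = tmul p q w + tmul p q' w.
Proof. by rewrite /Defs.mul -big_split; apply: eq_bigr => i _; rewrite mulrDr. Qed.

Lemma mul_scalel c (p q : series) w :
  tmul (fun v => c * p v) q w = c * tmul p q w.
Proof. by rewrite /Defs.mul big_distrr; apply: eq_bigr => i _; rewrite -mulrA. Qed.

Lemma mul_scaler c (p q : series) w :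
  tmul p (fun v => c * q v) w = c * tmul p q w.
Proof. by rewrite /Defs.mul big_distrr; apply: eq_bigr => i _; rewrite mulrCA. Qed.

Lemma mul_zerol (p q : series) : (forall w, p w = 0) -> forall w, tmul p q w = 0.
Proof. by move=> H w; rewrite /Defs.mul big1 // => i _; rewrite H mul0r. Qed.

Lemma mul_suml (c : 'I_3 -> k) (F : 'I_3 -> series) q w :
  tmul (fun v => \sum_(t < 3) c t * F t v) q w = \sum_(t < 3) c t * tmul (F t) q w.
Proof.
rewrite /Defs.mul; under eq_bigr do rewrite big_distrl.
rewrite exchange_big; apply: eq_bigr => t _; rewrite big_distrr.
apply: eq_bigr => i _; symmetry; apply: mulrA.
Qed.

Lemma d0_mul x (a p : series) l w :
  d0 x (tmul a p) l w = tmul (d0 x a l) p w + a [::] * d0 x p l w.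
Proof.
case: l => [b|[j t]] /=.
  by rewrite (mul_zerol (p := fun _ => 0)) // mulr0 addr0.
under eq_bigr do rewrite mul_cons mulrDr.
rewrite big_split /= addrC; congr (_ + _).
  by rewrite mul_suml.
by rewrite big_distrr; apply: eq_bigr => t' _; rewrite mulrCA.
Qed.

Lemma act_mul x (a p : series) w :
  act x (tmul a p) w = tmul (act x a) p w + tmul a (act x p) w.
Proof.
elim: w a => [|l w IH] a.
  by rewrite act_nil !mul_nil !act_nil mul0r mulr0 addr0.
rewrite act_cons (act_ext _ (fun v => mul_cons a p l v)) act_add act_scale IH.
rewrite mul_cons act_nil mul0r add0r.
rewrite (@mul_ext (fun v => act x a (l :: v)) (fun v => d0 x a l v + act x (fun u => a (l :: u)) v) p p); first last.
- by [].
- by move=> v; rewrite act_cons.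
rewrite mul_addl mul_cons act_cons d0_mul; ring.
Qed.


Lemma eq_inr (j j0 : J) (t t0 : 'I_3) :
  ((inr (j, t) : letter) == inr (j0, t0)) = (j == j0) && (t == t0).
Proof. by rewrite -sum_eqE /= xpair_eqE. Qed.
Lemma eq_inl_inr (b : I) j t : ((inl b : letter) == inr (j, t)) = false.
Proof. by rewrite -sum_eqE. Qed.
Lemma eq_inr_inl (b : I) j t : ((inr (j, t) : letter) == inl b) = false.
Proof. by rewrite -sum_eqE. Qed.
Lemma eq_inl (b b' : I) : ((inl b : letter) == inl b') = (b == b').
Proof. by rewrite -sum_eqE. Qed.

Lemma natr_andb (b1 b2 : bool) : ((b1 && b2)%:R : k) = b1%:R * b2%:R.
Proof. by case: b1; case: b2; rewrite /= ?mul1r ?mul0r. Qed.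

Lemma wf_cons l' v l w : wf (l' :: v) (l :: w) = (l == l')%:R * wf v w.
Proof. by rewrite /wordf eqseq_cons natr_andb. Qed.

Lemma wf_cons_nil l' v : wf (l' :: v) [::] = 0.
Proof. by []. Qed.

Lemma wf_nil_cons l w : wf [::] (l :: w) = 0.
Proof. by []. Qed.

Lemma act_wnil x w : act x (wf [::]) w = 0.
Proof.
case: w => [|l w]; first exact: act_nil.
rewrite act_cons (@act0 x (fun v => wf [::] (l :: v))) // addr0.
case: l => [b|[j t]] //=; rewrite big1 // => t' _; by rewrite mulr0.
Qed.

Definition cc x (l l' : letter) : k :=
  match l, l' with
  | inr (j, t), inr (j0, t0) => (j == j0)%:R * adj k x t0 t
  | _, _ => 0
  end.

Lemma act_wcons x l' v l w :
  act x (wf (l' :: v)) (l :: w) = cc x l l' * (w == v)%:R + (l == l')%:R * act x (wf v) w.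
Proof.
rewrite act_cons (act_ext _ (fun u => wf_cons l' v l u)) act_scale; congr (_ + _).
case: l => [b|[j t]] /=; first by rewrite mul0r.
case: l' => [b'|[j0 t0]].
  by rewrite /= mul0r big1 // => t' _; rewrite wf_cons eq_inr_inl mul0r mulr0.
rewrite (bigD1 t0) //= big1 ?addr0.
  by rewrite wf_cons eq_inr eqxx andbT /wordf; ring.
by move=> t' /negPf nt; rewrite wf_cons eq_inr nt andbF mul0r mulr0.
Qed.

Lemma sum_inr (c : 'I_3 -> k) (g : 'I_3 -> seq letter) j (l : letter) w :
  \sum_(t < 3) c t * wf (inr (j, t) :: g t) (l :: w) =
  match l with inr (j1, t1) => (j1 == j)%:R * c t1 * wf (g t1) w | inl _ => 0 end.
Proof.
case: l => [b|[j1 t1]].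
  by rewrite big1 // => t _; rewrite wf_cons eq_inl_inr mul0r mulr0.
rewrite (bigD1 t1) //= big1 ?addr0.
  by rewrite wf_cons eq_inr eqxx andbT; ring.
by move=> t /negPf nt; rewrite wf_cons eq_inr (eq_sym t1) nt andbF mul0r mulr0.
Qed.

Lemma act_tail x (v : seq I) j' t0 w :
  act x (wf (map inl v ++ [:: inr (j', t0)])) w =
  \sum_(t < 3) adj k x t0 t * wf (map inl v ++ [:: inr (j', t)]) w.
Proof.
elim: v w => [|b v IH] [|l w] /=.
- by rewrite act_nil big1 // => t _; rewrite mulr0.
- rewrite act_wcons act_wnil mulr0 addr0 sum_inr.
  case: l => [b|[j1 t1]] //=; rewrite /wordf; ring.
- by rewrite act_nil big1 // => t _; rewrite mulr0.
- rewrite act_wcons IH /=.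
  have ->: cc x l (inl b) = 0 by case: l => [?|[? ?]].
  rewrite mul0r add0r big_distrr; apply: eq_bigr => t _.
  by rewrite wf_cons; apply: mulrCA.
Qed.

Definition TW j j' (u : seq I) (X Y : 'I_3) : series :=
  wf (inr (j, X) :: map inl u ++ [:: inr (j', Y)]).

Lemma act_TW x j j' u X Y w :
  act x (TW j j' u X Y) w =
  \sum_(t < 3) adj k x X t * TW j j' u t Y w + \sum_(t < 3) adj k x Y t * TW j j' u X t w.
Proof.
case: w => [|l w].
  by rewrite act_nil !big1 ?addr0 // => t _; rewrite /TW wf_cons_nil mulr0.
rewrite /TW act_wcons act_tail.
rewrite (sum_inr (fun t => adj k x X t) (fun _ => map inl u ++ [:: inr (j', Y)])).
congr (_ + _).
  case: l => [b|[j1 t1]] //=; rewrite /wordf; ring.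
rewrite big_distrr; apply: eq_bigr => t _; rewrite wf_cons; apply: mulrCA.
Qed.


Definition modw (v : seq letter) n t : seq letter :=
  match drop n v with
  | inr (j, _) :: r => take n v ++ inr (j, t) :: r
  | _ => v
  end.

Definition Lact (s : seq (seq letter)) : seq (seq letter) :=
  [seq modw vn.1 vn.2 t | vn <- [seq (v, n) | v <- s, n <- iota 0 (size v)], t <- enum 'I_3].

Lemma finsupp_act x (a : series) : finsupp a -> finsupp (act x a).
Proof.
case=> s Hs; exists (Lact s) => w wn.
rewrite /act big1 // => n _.
case E: (drop n w) => [|[b|[j t]] r] //.
rewrite big1 // => t' _.
set v := take n w ++ inr (j, t') :: r.
suff -> : a v = 0 by rewrite mulr0.
apply: Hs; apply/negP => vs; apply/negP: wn; apply/negPn.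
have hn : (n < size w)%N.
  by rewrite ltnNge; apply/negP => h; move: E; rewrite drop_oversize.
have st : size (take n w) = n by rewrite size_takel // ltnW.
have Hv : modw v n t = w.
  by rewrite /modw /v drop_size_cat // take_size_cat // -E cat_take_drop.
rewrite -Hv.
apply/allpairsPdep; exists (v, nat_of_ord n), t; split; rewrite ?mem_enum //.
apply/allpairsPdep; exists v, (nat_of_ord n); split => //.
rewrite mem_iota add0n /v size_cat /= st; by rewrite addnS ltnS leq_addr.
Qed.

Lemma finsupp_wf u : finsupp (wf u).
Proof. by exists [:: u] => w; rewrite inE /wordf => /negPf ->. Qed.


Fixpoint wtr (w : seq letter) : k :=
  match w with
  | [::] => 0
  | inr (_, t) :: w' => adj k iH t t + wtr w'
  | inl _ :: w' => wtr w'
  end.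

Lemma act_H (p : series) w : act iH p w = wtr w * p w.
Proof.
elim: w p => [|l w IH] p; first by rewrite act_nil mul0r.
rewrite act_cons IH; case: l => [b|[j t]] /=; first by rewrite add0r.
rewrite ord3_sum; case: (ord3P t) => [->|[->|->]]; rewrite /adj /=; ring.
Qed.

Definition isE (l : letter) : bool := if l is inr (_, t) then t == iE else false.
Definition isF (l : letter) : bool := if l is inr (_, t) then t == iF else false.
Definition ce w := count isE w.
Definition cf w := count isF w.

Lemma wtr_count w : wtr w = 2 * (ce w)%:R - 2 * (cf w)%:R.
Proof.
rewrite /ce /cf; elim: w => [|l w IH] /=; first by rewrite subrr.
case: l => [b|[j t]] /=; first by rewrite !add0n.
case: (ord3P t) => [->|[->|->]]; rewrite /adj /= IH ?natrD; ring.
Qed.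

Lemma natr_inj (Hc : [pchar k] =i pred0) a b : (a%:R : k) = b%:R -> a = b.
Proof.
have H := (pcharf0P k).1 Hc.
wlog le : a b / (a <= b)%N.
  move=> W E; case: (leqP a b) => h; first exact: W.
  by symmetry; apply: W (ltnW h) _.
move=> E; have : ((b - a)%:R : k) == 0 by rewrite natrB // E subrr.
rewrite H => /eqP; lia.
Qed.

Definition noEF (l : letter) : bool := if l is inr (_, t) then t == iH else true.

Fixpoint firstE (w : seq letter) : bool :=
  match w with
  | [::] => false
  | inl _ :: w' => firstE w'
  | inr (_, t) :: w' => if t == iH then firstE w' else t == iE
  end.

Lemma firstE_dec w : firstE w ->
  exists m j' y, all noEF m /\ w = m ++ inr (j', iE) :: y.
Proof.
elim: w => [|l w IH] //=; case: l => [b|[j t]].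
  by move/IH => [m [j' [y [Hm ->]]]]; exists (inl b :: m), j', y.
case: (ord3P t) => [->|[->|->]] /=.
- by move=> _; exists [::], j, w.
- by move/IH => [m [j' [y [Hm ->]]]]; exists (inr (j, iH) :: m), j', y.
- by [].
Qed.

Lemma pair_or w :
  (exists x j m j' y, all noEF m /\ w = x ++ inr (j, iE) :: m ++ inr (j', iE) :: y)
  \/ (ce w <= cf w + firstE w)%N.
Proof.
elim: w => [|l w IH]; first by right.
case: IH => [[x [j [m [j' [y [Hm ->]]]]]] | H].
  by left; exists (l :: x), j, m, j', y.
move: H; rewrite /ce /cf.
case: l => [b|[j t]] H; first by right.
case: (ord3P t) => [->|[->|->]].
- case F: (firstE w).
  + left; case: (firstE_dec F) => m [j' [y [Hm ->]]].
    by exists [::], j, m, j', y.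
  + right; move: H; rewrite /= F; lia.
- by right.
- right; move: H; rewrite /=; case: (firstE w); lia.
Qed.

Lemma exists_pair w : (cf w + 2 <= ce w)%N ->
  exists x j m j' y, all noEF m /\ w = x ++ inr (j, iE) :: m ++ inr (j', iE) :: y.
Proof.
case: (pair_or w) => // H1 H2; exfalso; move: H1 H2; case: (firstE w); lia.
Qed.

Lemma noEF_dec m : all noEF m -> (exists u0, m = map inl u0) \/
  exists u j2 v, [/\ all noEF u, (size u < size m)%N & m = u ++ inr (j2, iH) :: map inl v].
Proof.
elim: m => [|l m IH] /=; first by left; exists [::].
case/andP => Hl /IH [[u0 ->]|[u [j2 [v [Hu Hs ->]]]]].
- case: l Hl => [b|[j t]] Hl; first by left; exists (b :: u0).
  by right; exists [::], j, u0; split => //; move/eqP: Hl => ->.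
- right; exists (l :: u), j2, v; split => //=; first by rewrite Hl Hu.
  rewrite ltnS size_cat /=; lia.
Qed.

Definition Mset := submod_gen (@eBAeB k I J).
Definition JJ := ideal_gen Mset.

Lemma J_ext (p q : series) : JJ p -> (forall w, p w = q w) -> JJ q.
Proof. by move=> H E; apply: id_ext E H. Qed.

Lemma J_sand x y q : JJ q -> JJ (tmul (wf x) (tmul q (wf y))).
Proof. by move=> H; apply: id_mull (finsupp_wf x) _; apply: id_mulr (finsupp_wf y) H. Qed.

Lemma mul_wf_nil q w : tmul (wf [::]) q w = q w.
Proof.
case: w => [|l w]; first by rewrite mul_nil /wordf /= mul1r.
by rewrite mul_cons (@mul_zerol (fun v => wf [::] (l :: v))) // /wordf /= mul1r addr0.
Qed.

Lemma mul_wf u v w : tmul (wf u) (wf v) w = wf (u ++ v) w.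
Proof.
elim: u w => [|a u IH] w; first exact: mul_wf_nil.
case: w => [|l w]; first by rewrite mul_nil wf_cons_nil mul0r.
rewrite mul_cons wf_cons_nil mul0r add0r.
rewrite (@mul_ext (fun x => wf (a :: u) (l :: x)) (fun x => (l == a)%:R * wf u x) (wf v) (wf v)) //.
  by rewrite mul_scalel IH /= wf_cons.
by move=> x; rewrite wf_cons.
Qed.

Lemma sand_wf x g y w : tmul (wf x) (tmul (wf g) (wf y)) w = wf (x ++ g ++ y) w.
Proof.
rewrite (@mul_ext (wf x) (wf x) (tmul (wf g) (wf y)) (wf (g ++ y))) //; first exact: mul_wf.
by move=> v; exact: mul_wf.
Qed.

Lemma J_base x y j j' u :
  JJ (wf (x ++ inr (j, iE) :: map inl u ++ inr (j', iE) :: y)).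
Proof.
have G : Mset (wf (inr (j, iE) :: map inl u ++ [:: inr (j', iE)])).
  by apply: sm_gen; exists j, j', u.
apply: J_ext (J_sand x y (id_gen G)) _ => w.
by rewrite sand_wf /= -catA.
Qed.

Lemma act_rel j2 j' v w :
  act iF (wf (inr (j2, iE) :: map inl v ++ [:: inr (j', iE)])) w =
  - (wf (inr (j2, iH) :: map inl v ++ [:: inr (j', iE)]) w +
     wf (inr (j2, iE) :: map inl v ++ [:: inr (j', iH)]) w).
Proof.
have := act_TW iF j2 j' v iE iE w; rewrite /TW => ->.
rewrite !ord3_sum /adj /=; ring.
Qed.

Lemma J_relsum x y j2 j' v :
  JJ (fun w => wf (x ++ (inr (j2, iH) :: map inl v ++ [:: inr (j', iE)]) ++ y) w +
               wf (x ++ (inr (j2, iE) :: map inl v ++ [:: inr (j', iH)]) ++ y) w).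
Proof.
set G0 := inr (j2, iE) :: map inl v ++ [:: inr (j', iE)].
set G1 := inr (j2, iH) :: map inl v ++ [:: inr (j', iE)].
set G2 := inr (j2, iE) :: map inl v ++ [:: inr (j', iH)].
have G : Mset (act iF (wf G0)) by apply: sm_act; apply: sm_gen; exists j2, j', v.
have := id_scale (-1) (J_sand x y (id_gen G)).
move/J_ext; apply => w.
have E1 : forall u, tmul (act iF (wf G0)) (wf y) u =
    -1 * (wf (G1 ++ y) u + wf (G2 ++ y) u).
  move=> u.
  rewrite (@mul_ext (act iF (wf G0)) (fun u => -1 * (wf G1 u + wf G2 u)) (wf y) (wf y)) //.
    by rewrite mul_scalel mul_addl !mul_wf.
  by move=> u'; rewrite act_rel; ring.
rewrite (@mul_ext (wf x) (wf x) _ _ (fun _ => erefl) E1) mul_scaler mul_addr !mul_wf.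
ring.
Qed.


Lemma pairJ n : forall m, (size m < n)%N -> all noEF m -> forall x y j j',
  JJ (wf (x ++ inr (j, iE) :: m ++ inr (j', iE) :: y)).
Proof.
elim: n => [|n IHn] m //= Hs Hm x y j j'.
case: (noEF_dec Hm) => [[u0 ->]|[u [j2 [v [Hu Hsz ->]]]]]; first exact: J_base.
have Hlt : (size u < n)%N by apply: leq_trans Hsz _; rewrite -ltnS.
have H1 := IHn u Hlt Hu x (map inl v ++ inr (j', iH) :: y) j j2.
have H2 := J_relsum (x ++ inr (j, iE) :: u) y j2 j' v.
apply: J_ext (id_add (id_scale (-1) H1) H2) _ => w.
have E1 : (x ++ inr (j, iE) :: u) ++ (inr (j2, iH) :: map inl v ++ [:: inr (j', iE)]) ++ y
   = x ++ inr (j, iE) :: (u ++ inr (j2, iH) :: map inl v) ++ inr (j', iE) :: y.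
  by do 5!rewrite -?catA /=.
have E2 : (x ++ inr (j, iE) :: u) ++ (inr (j2, iE) :: map inl v ++ [:: inr (j', iH)]) ++ y
   = x ++ inr (j, iE) :: u ++ inr (j2, iE) :: map inl v ++ inr (j', iH) :: y.
  by do 5!rewrite -?catA /=.
rewrite E1 E2; ring.
Qed.

Lemma K_word w : (cf w + 2 <= ce w)%N -> JJ (wf w).
Proof.
move/exists_pair => [x [j [m [j' [y [Hm ->]]]]]].
exact: (@pairJ (size m).+1).
Qed.

Lemma J_act (p : series) : JJ p -> forall x, JJ (act x p).
Proof.
elim => {p} [p Hp|| p q _ IHp _ IHq| c p _ IH | a p Ha Hp IH | a p Ha Hp IH | p q Hpq _ IH] x.
- by apply: id_gen; apply: sm_act.
- by apply: J_ext (id_zero _) _ => w; rewrite act0.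
- by apply: J_ext (id_add (IHp x) (IHq x)) _ => w; rewrite act_add.
- by apply: J_ext (id_scale c (IH x)) _ => w; rewrite act_scale.
- apply: J_ext (id_add (id_mull (finsupp_act x Ha) Hp) (id_mull Ha (IH x))) _ => w.
  by rewrite act_mul.
- apply: J_ext (id_add (id_mulr Ha (IH x)) (id_mulr (finsupp_act x Ha) Hp)) _ => w.
  by rewrite act_mul.
- by apply: J_ext (IH x) _ => w; apply: act_ext.
Qed.

Lemma supp_ind (Q : series -> Prop) :
  Q (fun _ => 0) ->
  (forall p q, Q p -> Q q -> Q (fun w => p w + q w)) ->
  (forall c p, Q p -> Q (fun w => c * p w)) ->
  (forall p q, (forall w, p w = q w) -> Q p -> Q q) ->
  forall p, finsupp p -> (forall u, p u != 0 -> Q (wf u)) -> Q p.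
Proof.
move=> Q0 Qadd Qsc Qext p [s Hs]; elim: s p Hs => [|u s IH] p Hs Hw.
  by apply: Qext Q0 => w; rewrite Hs.
pose p' := fun w => if w == u then 0 else p w.
have Hp' : Q p'.
  apply: IH => [w ws|u'].
    rewrite /p'; case: (w =P u) => // /eqP wu; apply: Hs; by rewrite inE negb_or wu.
  rewrite /p'; case: (u' =P u) => [_|_ H]; [by rewrite eqxx | exact: Hw].
have Hu : Q (fun w => p u * wf u w).
  case: (eqVneq (p u) 0) => [->|nz].
    by apply: Qext Q0 => w; rewrite mul0r.
  exact: Qsc (Hw _ nz).
apply: Qext (Qadd _ _ Hu Hp') => w.
rewrite /p' /wordf /=; by case: (w =P u) => [->|ne] /=; ring.
Qed.

Lemma phi_J (Hc : [pchar k] =i pred0) m phi : is_Lhom m phi -> m <> 0%N -> m <> 2%N ->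
  forall i, (i <= m)%N -> JJ (phi i).
Proof.
move=> Hl m0 m2; elim => [|i IH] Hi.
  case: (Hl 0%N Hi) => Hfs Hh _ _.
  apply: (supp_ind (id_zero _) (@id_add _ _ _ _) (@id_scale _ _ _ _) (@id_ext _ _ _ _) Hfs).
  move=> u Hu; apply: K_word.
  have := Hh u; rewrite act_H wtr_count muln0 subr0 => /(mulIf Hu) E.
  have : (2 * ce u)%N = (m + 2 * cf u)%N.
    by apply: (natr_inj Hc); rewrite natrD !natrM -E; ring.
  lia.
have Hi' : (i <= m)%N by lia.
case: (Hl i Hi') => _ _ Hf _.
by apply: J_ext (J_act (IH Hi') iF) _ => w; rewrite Hf Hi.
Qed.


Definition coef (i : nat) (X Y : 'I_3) : k :=
  match i, val X, val Y with
  | 0%N, 0%N, 0%N => 1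
  | 1%N, 1%N, 0%N => -1
  | 1%N, 0%N, 1%N => -1
  | 2%N, 1%N, 1%N => 2
  | 2%N, 2%N, 0%N => -2
  | 2%N, 0%N, 2%N => -2
  | 3%N, 2%N, 1%N => 6
  | 3%N, 1%N, 2%N => 6
  | 4%N, 2%N, 2%N => 24
  | _, _, _ => 0
  end.

Definition Pc j j' u (c : 'I_3 -> 'I_3 -> k) : series :=
  fun w => \sum_(X < 3) \sum_(Y < 3) c X Y * TW j j' u X Y w.

Lemma act_sum3 x (F : 'I_3 -> series) w :
  act x (fun v => \sum_(i < 3) F i v) w = \sum_(i < 3) act x (F i) w.
Proof.
rewrite (act_ext _ (fun v => ord3_sum (fun i => F i v))) !act_add ord3_sum //.
Qed.

Lemma act_Pc x j j' u c w :
  act x (Pc j j' u c) w = \sum_(X < 3) \sum_(Y < 3) c X Y *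
    (\sum_(t < 3) adj k x X t * TW j j' u t Y w + \sum_(t < 3) adj k x Y t * TW j j' u X t w).
Proof.
rewrite /Pc act_sum3; apply: eq_bigr => X _; rewrite act_sum3; apply: eq_bigr => Y _.
by rewrite act_scale act_TW.
Qed.

Lemma finsupp_Pc j j' u c : finsupp (Pc j j' u c).
Proof.
exists [seq inr (j, X) :: map inl u ++ [:: inr (j', Y)] | X <- enum 'I_3, Y <- enum 'I_3].
move=> w wn; rewrite /Pc big1 // => X _; rewrite big1 // => Y _.
have H : inr (j, X) :: map inl u ++ [:: inr (j', Y)] \in
  [seq inr (j, X) :: map inl u ++ [:: inr (j', Y)] | X <- enum 'I_3, Y <- enum 'I_3].
  by apply: (allpairs_f (fun X Y => inr (j, X) :: map inl u ++ [:: inr (j', Y)])); rewrite mem_enum.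
rewrite /TW /wordf; case: eqP => [E|_]; last by rewrite mulr0.
by move: wn; rewrite E H.
Qed.

Lemma act_Pc_coef x j j' u c w :
  act x (Pc j j' u c) w = Pc j j' u (fun X' Y' =>
     \sum_(X < 3) c X Y' * adj k x X X' + \sum_(Y < 3) c X' Y * adj k x Y Y') w.
Proof.
rewrite act_Pc /Pc.
under eq_bigr do under eq_bigr do rewrite mulrDr !big_distrr.
under [RHS]eq_bigr do under eq_bigr do rewrite mulrDl !big_distrl.
under eq_bigr do rewrite big_split /=.
rewrite big_split /=.
under [RHS]eq_bigr do rewrite big_split /=.
rewrite [RHS]big_split /=.
congr (_ + _).
  under eq_bigr do rewrite exchange_big /=.
  rewrite exchange_big /=.
  under eq_bigr do rewrite exchange_big /=.
  apply: eq_bigr => X _; apply: eq_bigr => Y _; apply: eq_bigr => t _.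
  by rewrite /= mulrA.
under eq_bigr do rewrite exchange_big /=.
apply: eq_bigr => X _; apply: eq_bigr => Y _; apply: eq_bigr => t _.
by rewrite /= mulrA.
Qed.

Lemma Pc_scale j j' u c1 c2 a : (forall X Y, c1 X Y = a * c2 X Y) ->
  forall w, Pc j j' u c1 w = a * Pc j j' u c2 w.
Proof.
move=> H w; rewrite /Pc big_distrr; apply: eq_bigr => X _; rewrite big_distrr.
by apply: eq_bigr => Y _; rewrite H /= mulrA.
Qed.

Lemma Pc_eq j j' u c1 c2 : (forall X Y, c1 X Y = c2 X Y) ->
  forall w, Pc j j' u c1 w = Pc j j' u c2 w.
Proof. by move=> H w; rewrite (@Pc_scale _ _ _ c1 c2 1) ?mul1r // => X Y; rewrite H mul1r. Qed.

Lemma Pc_zero j j' u c : (forall X Y, c X Y = 0) -> forall w, Pc j j' u c w = 0.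
Proof. by move=> H w; rewrite /Pc big1 // => X _; rewrite big1 // => Y _; rewrite H mul0r. Qed.

Lemma Lhom_gen j j' u : is_Lhom 4 (fun i => Pc j j' u (coef i)).
Proof.
move=> i; case: i => [|[|[|[|[|i]]]]] // _; split; try exact: finsupp_Pc;
  move=> w; rewrite act_Pc_coef /=;
  first [apply: Pc_zero | apply: Pc_eq | apply: Pc_scale] => X Y;
  case: (ord3P X) => [->|[->|->]]; case: (ord3P Y) => [->|[->|->]]; rewrite !ord3_sum /coef /adj /= ?subSS ?subn0 ?subnn; ring.
Qed.

Lemma Pc0 j j' u w : Pc j j' u (coef 0) w = TW j j' u iE iE w.
Proof. rewrite /Pc !ord3_sum /coef /=; ring. Qed.

Lemma L_ext m (p q : series) : isotypic m p -> (forall w, p w = q w) -> isotypic m q.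
Proof. by move=> H E; apply: ls_ext E H. Qed.

Lemma iso_phi m (phi : nat -> series) i : is_Lhom m phi -> (i <= m)%N -> isotypic m (phi i).
Proof. by move=> Hl Hi; apply: ls_gen; exists phi; split => //; exists i. Qed.

Lemma iso_act m (q : series) : isotypic m q -> forall x, isotypic m (act x q).
Proof.
elim => {q} [q [phi [Hl [i Hi ->]]]| |p q _ IHp _ IHq|c p _ IH|p q Hpq _ IH] x.
- case: (Hl i Hi) => _ Hh Hf He; case: (ord3P x) => [->|[->|->]].
  + clear Hh Hf; case: i Hi He => [|i'] Hi He.
      by apply: L_ext (ls_zero _) _ => w; rewrite He.
    apply: L_ext (ls_scale ((i'.+1 * (m - i'.+1 + 1))%:R) (iso_phi Hl (ltnW Hi))) _.
    by move=> w; rewrite He.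
  + by apply: L_ext (ls_scale _ (iso_phi Hl Hi)) _ => w; rewrite Hh.
  + case E: (i < m)%N.
      by apply: L_ext (iso_phi Hl E) _ => w; rewrite Hf E.
    by apply: L_ext (ls_zero _) _ => w; rewrite Hf E.
- by apply: L_ext (ls_zero _) _ => w; rewrite act0.
- by apply: L_ext (ls_add (IHp x) (IHq x)) _ => w; rewrite act_add.
- by apply: L_ext (ls_scale c (IH x)) _ => w; rewrite act_scale.
- by apply: L_ext (IH x) _ => w; apply: act_ext.
Qed.

Lemma sub_iso4 (q : series) : submod_gen (@eBAeB k I J) q -> isotypic 4 q.
Proof.
elim => {q} [q [j [j' [u ->]]]| |p q _ IHp _ IHq|c p _ IH|x p _ IH|p q Hpq _ IH].
- by apply: L_ext (@iso_phi 4 _ 0 (Lhom_gen j j' u) isT) _ => w; rewrite Pc0.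
- exact: ls_zero.
- exact: ls_add.
- exact: ls_scale.
- exact: iso_act.
- exact: L_ext IH Hpq.
Qed.

Lemma ideal_sub (S S' : series -> Prop) p :
  (forall q, S q -> ideal_gen S' q) -> ideal_gen S p -> ideal_gen S' p.
Proof.
move=> H; elim => {p} [p Hp|| p q _ IHp _ IHq| c p _ IH | a p Ha _ IH | a p Ha _ IH | p q Hpq _ IH].
- exact: H.
- exact: id_zero.
- exact: id_add.
- exact: id_scale.
- exact: id_mull.
- exact: id_mulr.
- exact: id_ext Hpq IH.
Qed.

End Work.

Unset Implicit Arguments.

Theorem proposition4p1 (k : fieldType) (I J : eqType) :
  [pchar k] =i pred0 ->
  forall p : series k I J,
    tkk_ideal p <-> ideal_gen (submod_gen (@eBAeB k I J)) p.
Proof.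
move=> Hc p; split.
  apply: ideal_sub => q [m [m0 m2 Hq]].
  elim: Hq => {q} [q [phi [Hl [i Hi ->]]]| |p1 q _ IHp _ IHq|c p1 _ IH|p1 q Hpq _ IH].
  - exact: phi_J Hc m phi Hl m0 m2 i Hi.
  - exact: id_zero.
  - exact: id_add.
  - exact: id_scale.
  - exact: id_ext Hpq IH.
apply: ideal_sub => q Hq; apply: id_gen; exists 4%N; split => //.
exact: sub_iso4.
Qed.
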